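(* In the category of domain-complete spaces (resp. of LCS-complete spaces) with continuous maps, every exponentiable object is a locally compact sober space. Consequently neither of these categories is Cartesian-closed.
   Context: A space is domain-complete (resp. LCS-complete) if it is homeomorphic to a $G_\delta$ subset (countable intersection of open sets), with the subspace topology, of some continuous dcpo with its Scott topology (resp. of some locally compact sober space, locally compact meaning every point has a neighborhood base of compact saturated sets). Both categories have finite products, computed as topological products. An object $X$ is exponentiable if the functor $-\times X$ has a right adjoint. *)

(* Defs.v *)
From Stdlib Require Import List.

Record Top := {
  carrier :> Type;
  is_open : (carrier -> Prop) -> Prop;
  open_ext : forall U V : carrier -> Prop,
      (forall x, U x <-> V x) -> is_open U -> is_open V;
  open_full : is_open (fun _ => True);
  open_inter : forall U V, is_open U -> is_open V -> is_open (fun x => U x /\ V x);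
  open_union : forall F : (carrier -> Prop) -> Prop,
      (forall U, F U -> is_open U) -> is_open (fun x => exists U, F U /\ U x)
}.
Arguments is_open {t} _.

Definition continuous {X Y : Top} (f : X -> Y) : Prop :=
  forall V : Y -> Prop, is_open V -> is_open (fun x => V (f x)).

Definition homeomorphic (X Y : Top) : Prop :=
  exists (f : X -> Y) (g : Y -> X),
    continuous f /\ continuous g /\
    (forall x, g (f x) = x) /\ (forall y, f (g y) = y).

Section Subspace.
Variables (X : Top) (A : X -> Prop).
Definition sub_open (U : {x : X | A x} -> Prop) : Prop :=
  exists V : X -> Prop, is_open V /\ forall y, U y <-> V (proj1_sig y).
Lemma sub_open_ext : forall U V, (forall x, U x <-> V x) -> sub_open U -> sub_open V.
Proof. intros U V H [W [HW HU]]. exists W; split; auto. intro y; rewrite <- HU; symmetry; auto. Qed.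
Lemma sub_open_full : sub_open (fun _ => True).
Proof. exists (fun _ => True); split; [apply open_full | tauto]. Qed.
Lemma sub_open_inter : forall U V, sub_open U -> sub_open V -> sub_open (fun x => U x /\ V x).
Proof.
  intros U V [U' [HU' HU]] [V' [HV' HV]]. exists (fun x => U' x /\ V' x); split.
  - apply open_inter; auto.
  - intro y; rewrite HU, HV; tauto.
Qed.
Lemma sub_open_union : forall F : ({x : X | A x} -> Prop) -> Prop,
    (forall U, F U -> sub_open U) -> sub_open (fun x => exists U, F U /\ U x).
Proof.
  intros F HF.
  exists (fun x => exists W, is_open W /\ (exists U, F U /\ forall y, U y <-> W (proj1_sig y)) /\ W x).
  split.
  - apply (open_ext _ (fun x => exists W, (fun W => is_open W /\
       (exists U, F U /\ forall y, U y <-> W (proj1_sig y))) W /\ W x)).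
    + intro x; split; intros [W HW]; exists W; tauto.
    + apply open_union. intros W [HW _]; exact HW.
  - intros y; split.
    + intros [U [FU Uy]]. destruct (HF U FU) as [W [HW HUW]].
      exists W; repeat split; auto. exists U; split; auto. apply HUW; auto.
    + intros [W [HW [[U [FU HUW]] Wy]]]. exists U; split; auto. apply HUW; auto.
Qed.
Definition subspace : Top :=
  {| carrier := {x : X | A x}; is_open := sub_open;
     open_ext := sub_open_ext; open_full := sub_open_full;
     open_inter := sub_open_inter; open_union := sub_open_union |}.
End Subspace.

Section Product.
Variables X Y : Top.
Definition prod_open (U : X * Y -> Prop) : Prop :=
  forall p, U p -> exists (V : X -> Prop) (W : Y -> Prop),
    is_open V /\ is_open W /\ V (fst p) /\ W (snd p) /\
    forall x y, V x -> W y -> U (x, y).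
Lemma prod_open_ext : forall U V, (forall x, U x <-> V x) -> prod_open U -> prod_open V.
Proof.
  intros U V H HU p Vp. destruct (HU p (proj2 (H p) Vp)) as [A [B HAB]].
  exists A, B; intuition. apply H; auto.
Qed.
Lemma prod_open_full : prod_open (fun _ => True).
Proof. intros p _. exists (fun _ => True), (fun _ => True); intuition; apply open_full. Qed.
Lemma prod_open_inter : forall U V, prod_open U -> prod_open V -> prod_open (fun x => U x /\ V x).
Proof.
  intros U V HU HV p [Up Vp].
  destruct (HU p Up) as [A [B [HA [HB [Ap [Bp HAB]]]]]].
  destruct (HV p Vp) as [A' [B' [HA' [HB' [Ap' [Bp' HAB']]]]]].
  exists (fun x => A x /\ A' x), (fun y => B y /\ B' y).
  repeat split; try apply open_inter; intuition.
Qed.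
Lemma prod_open_union : forall F : (X * Y -> Prop) -> Prop,
    (forall U, F U -> prod_open U) -> prod_open (fun x => exists U, F U /\ U x).
Proof.
  intros F HF p [U [FU Up]]. destruct (HF U FU p Up) as [A [B HAB]].
  exists A, B; intuition. exists U; split; auto.
Qed.
Definition prod_top : Top :=
  {| carrier := (X * Y)%type; is_open := prod_open;
     open_ext := prod_open_ext; open_full := prod_open_full;
     open_inter := prod_open_inter; open_union := prod_open_union |}.
End Product.

Definition G_delta {X : Top} (A : X -> Prop) : Prop :=
  exists U : nat -> X -> Prop,
    (forall n, is_open (U n)) /\ forall x, A x <-> forall n, U n x.

Record Dcpo := {
  dcarrier :> Type;
  le : dcarrier -> dcarrier -> Prop;
  le_refl : forall x, le x x;
  le_trans : forall x y z, le x y -> le y z -> le x z;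
  le_antisym : forall x y, le x y -> le y x -> x = y;
  dcpo_complete : forall D : dcarrier -> Prop,
      ((exists d, D d) /\
       (forall a b, D a -> D b -> exists c, D c /\ le a c /\ le b c)) ->
      exists s, (forall d, D d -> le d s) /\
                (forall u, (forall d, D d -> le d u) -> le s u)
}.
Arguments le {d} _ _.

Definition directed {P : Dcpo} (D : P -> Prop) : Prop :=
  (exists d, D d) /\ (forall a b, D a -> D b -> exists c, D c /\ le a c /\ le b c).

Definition is_sup {P : Dcpo} (D : P -> Prop) (s : P) : Prop :=
  (forall d, D d -> le d s) /\ (forall u, (forall d, D d -> le d u) -> le s u).

Definition way_below {P : Dcpo} (x y : P) : Prop :=
  forall (D : P -> Prop) (s : P), directed D -> is_sup D s -> le y s ->
    exists d, D d /\ le x d.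

Definition continuous_dcpo (P : Dcpo) : Prop :=
  forall x : P, directed (fun y => way_below y x) /\ is_sup (fun y => way_below y x) x.

Definition scott_open {P : Dcpo} (U : P -> Prop) : Prop :=
  (forall x y, U x -> le x y -> U y) /\
  (forall (D : P -> Prop) (s : P), directed D -> is_sup D s -> U s ->
     exists d, D d /\ U d).

Section Scott.
Variable P : Dcpo.
Lemma scott_ext : forall U V : P -> Prop, (forall x, U x <-> V x) -> scott_open U -> scott_open V.
Proof.
  intros U V H [H1 H2]; split.
  - intros x y Vx xy; apply H; apply (H1 x); auto; apply H; auto.
  - intros D s HD Hs Vs. destruct (H2 D s HD Hs (proj2 (H s) Vs)) as [d [Dd Ud]].
    exists d; split; auto; apply H; auto.
Qed.
Lemma scott_full : scott_open (fun _ : P => True).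
Proof. split; auto. intros D s [[d Dd] _] _ _; exists d; auto. Qed.
Lemma scott_inter : forall U V : P -> Prop, scott_open U -> scott_open V ->
    scott_open (fun x => U x /\ V x).
Proof.
  intros U V [U1 U2] [V1 V2]; split.
  - intros x y [Ux Vx] xy; split; eauto.
  - intros D s HD Hs [Us Vs].
    destruct (U2 D s HD Hs Us) as [a [Da Ua]].
    destruct (V2 D s HD Hs Vs) as [b [Db Vb]].
    destruct (proj2 HD a b Da Db) as [c [Dc [ac bc]]].
    exists c; split; auto; split; eauto.
Qed.
Lemma scott_union : forall F : (P -> Prop) -> Prop,
    (forall U, F U -> scott_open U) -> scott_open (fun x => exists U, F U /\ U x).
Proof.
  intros F HF; split.
  - intros x y [U [FU Ux]] xy; exists U; split; auto. apply (proj1 (HF U FU) x); auto.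
  - intros D s HD Hs [U [FU Us]]. destruct (proj2 (HF U FU) D s HD Hs Us) as [d [Dd Ud]].
    exists d; split; auto; exists U; auto.
Qed.
Definition scott_space : Top :=
  {| carrier := P; is_open := scott_open;
     open_ext := scott_ext; open_full := scott_full;
     open_inter := scott_inter; open_union := scott_union |}.
End Scott.

Definition is_closed {X : Top} (C : X -> Prop) : Prop := is_open (fun x => ~ C x).

Definition point_closure {X : Top} (x : X) : X -> Prop :=
  fun y => forall C : X -> Prop, is_closed C -> C x -> C y.

Definition irreducible_closed {X : Top} (C : X -> Prop) : Prop :=
  is_closed C /\ (exists x, C x) /\
  forall C1 C2 : X -> Prop, is_closed C1 -> is_closed C2 ->
    (forall x, C x -> C1 x \/ C2 x) ->
    (forall x, C x -> C1 x) \/ (forall x, C x -> C2 x).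

Definition sober (X : Top) : Prop :=
  forall C : X -> Prop, irreducible_closed C ->
    exists x, (forall y, C y <-> point_closure x y) /\
      forall x', (forall y, C y <-> point_closure x' y) -> x' = x.

Definition compact {X : Top} (Q : X -> Prop) : Prop :=
  forall F : (X -> Prop) -> Prop,
    (forall U, F U -> is_open U) ->
    (forall x, Q x -> exists U, F U /\ U x) ->
    exists l : list (X -> Prop), (forall U, In U l -> F U) /\
      forall x, Q x -> exists U, In U l /\ U x.

Definition saturated {X : Top} (Q : X -> Prop) : Prop :=
  forall x, (forall U, is_open U -> (forall y, Q y -> U y) -> U x) -> Q x.

Definition locally_compact (X : Top) : Prop :=
  forall (x : X) (U : X -> Prop), is_open U -> U x ->
    exists Q : X -> Prop, compact Q /\ saturated Q /\ (forall y, Q y -> U y) /\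
      exists V, is_open V /\ V x /\ forall y, V y -> Q y.

Definition domain_complete (X : Top) : Prop :=
  exists (P : Dcpo) (A : scott_space P -> Prop),
    continuous_dcpo P /\ G_delta A /\ homeomorphic X (subspace (scott_space P) A).

Definition LCS_complete (X : Top) : Prop :=
  exists (Y : Top) (A : Y -> Prop),
    locally_compact Y /\ sober Y /\ G_delta A /\ homeomorphic X (subspace Y A).

(** * Exponentiability in the full subcategory of Top on objects satisfying C.
    Products in these categories are topological products, so -×X has a
    right adjoint iff for each object Y there is a universal arrow
    ev : E × X -> Y (pointwise description of the right adjoint). *)
Definition exponentiable (C : Top -> Prop) (X : Top) : Prop :=
  forall Y : Top, C Y ->
    exists (E : Top) (ev : prod_top E X -> Y),
      C E /\ continuous ev /\
      forall (Z : Top) (f : prod_top Z X -> Y), C Z -> continuous f ->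
        exists g : Z -> E,
          continuous g /\ (forall z x, f (z, x) = ev (g z, x)) /\
          forall g' : Z -> E, continuous g' -> (forall z x, f (z, x) = ev (g' z, x)) ->
            forall z, g' z = g z.

Definition cartesian_closed (C : Top -> Prop) : Prop :=
  forall X : Top, C X -> exponentiable C X.

(* Main.v *)
Require Import Defs.
From Stdlib Require Import List Classical ClassicalEpsilon FunctionalExtensionality PropExtensionality ProofIrrelevance Arith Lia.

Lemma pred_ext {A : Type} (P Q : A -> Prop) : (forall a, P a <-> Q a) -> P = Q.
Proof. intro H; apply functional_extensionality; intro a; apply propositional_extensionality; auto. Qed.

Section TopFacts.
Variable X : Top.

Lemma open_empty : is_open (fun _ : X => False).
Proof.
  apply (open_ext X (fun x => exists U, (fun _ : X -> Prop => False) U /\ U x)).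
  - intro x; split; [intros [U [[] _]] | intros []].
  - apply open_union; intros U [].
Qed.

Lemma open_union2 (A B : X -> Prop) : is_open A -> is_open B -> is_open (fun x => A x \/ B x).
Proof.
  intros HA HB.
  apply (open_ext X (fun x => exists U, (fun U => U = A \/ U = B) U /\ U x)).
  - intro x; split.
    + intros [U [[-> | ->] Ux]]; auto.
    + intros [Ax | Bx]; [exists A | exists B]; auto.
  - apply open_union; intros U [-> | ->]; auto.
Qed.

Lemma closed_compl (U : X -> Prop) : is_open U -> is_closed (fun x => ~ U x).
Proof.
  intro HU; unfold is_closed. apply (open_ext X U); auto.
  intro x; split; [tauto | apply NNPP].
Qed.

Lemma open_const (P : Prop) : is_open (fun _ : X => P).
Proof.
  destruct (classic P) as [p | np].
  - apply (open_ext X (fun _ => True)); [tauto | apply open_full].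
  - apply (open_ext X (fun _ => False)); [tauto | apply open_empty].
Qed.

Definition dirfam (F : (X -> Prop) -> Prop) : Prop :=
  (exists W, F W) /\
  forall W1 W2, F W1 -> F W2 -> exists W3, F W3 /\ (forall y, W1 y -> W3 y) /\ (forall y, W2 y -> W3 y).

Definition wb (V U : X -> Prop) : Prop :=
  forall F : (X -> Prop) -> Prop, (forall W, F W -> is_open W) -> dirfam F ->
    (forall y, U y -> exists W, F W /\ W y) -> exists W, F W /\ forall y, V y -> W y.

Definition core_compact : Prop :=
  forall U, is_open U -> forall x, U x -> exists V, is_open V /\ V x /\ wb V U.

Lemma wb_sub V U : is_open U -> wb V U -> forall y, V y -> U y.
Proof.
  intros HU H. destruct (H (fun W => W = U)) as [W [-> HW]]; auto.
  - intros W ->; auto.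
  - split; [exists U; auto | intros W1 W2 -> ->; exists U; auto].
  - intros y Uy; exists U; auto.
Qed.

Lemma wb_mono V' V U U' : (forall y, V' y -> V y) -> (forall y, U y -> U' y) -> wb V U -> wb V' U'.
Proof.
  intros H1 H2 H F HF HD Hc. destruct (H F HF HD) as [W [FW HW]].
  - intros y Uy; apply Hc; auto.
  - exists W; split; auto.
Qed.

Lemma wb_union V1 V2 U : wb V1 U -> wb V2 U -> wb (fun y => V1 y \/ V2 y) U.
Proof.
  intros H1 H2 F HF HD Hc.
  destruct (H1 F HF HD Hc) as [W1 [F1 HW1]].
  destruct (H2 F HF HD Hc) as [W2 [F2 HW2]].
  destruct (proj2 HD W1 W2 F1 F2) as [W3 [F3 [A B]]].
  exists W3; split; auto. intros y [a | b]; auto.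
Qed.

Lemma wb_empty U : wb (fun _ => False) U.
Proof. intros F HF [[W FW] _] _. exists W; split; auto; intros y []. Qed.

Lemma wb_interp (cc : core_compact) V U : is_open U -> wb V U ->
  exists W, is_open W /\ wb V W /\ wb W U.
Proof.
  intros HU H.
  set (G := fun W => is_open W /\ exists W', is_open W' /\ wb W W' /\ wb W' U).
  destruct (H G) as [W [[HW [W' [HW' [A B]]]] HVW]].
  - intros W [h _]; auto.
  - split.
    + exists (fun _ => False). split; [apply open_empty|].
      exists (fun _ => False); split; [apply open_empty|]. split; apply wb_empty.
    + intros W1 W2 [o1 [W1' [o1' [a1 b1]]]] [o2 [W2' [o2' [a2 b2]]]].
      exists (fun y => W1 y \/ W2 y). split; [split|].
      * apply open_union2; auto.
      * exists (fun y => W1' y \/ W2' y). split; [apply open_union2; auto|]. split.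
        -- apply wb_union.
           ++ apply (wb_mono W1 W1 W1'); auto.
           ++ apply (wb_mono W2 W2 W2'); auto.
        -- apply wb_union; auto.
      * split; auto.
  - intros y Uy. destruct (cc U HU y Uy) as [W' [HW' [yW' wW']]].
    destruct (cc W' HW' y yW') as [W [HW [yW wW]]].
    exists W; split; auto. split; auto. exists W'; auto.
  - exists W'; split; auto. split; auto. apply (wb_mono V W W'); auto.
Qed.

End TopFacts.
Arguments wb {X} V U.
Arguments dirfam {X} F.
Arguments core_compact X : clear implicits.


Section Zorn.
Variable A : Type.
Variable good : (A -> Prop) -> Prop.
Definition zle (K L : A -> Prop) := forall a, L a -> K a.
Definition zchain (Ch : (A -> Prop) -> Prop) := forall K1 K2, Ch K1 -> Ch K2 -> zle K1 K2 \/ zle K2 K1.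
Definition inter (Ch : (A -> Prop) -> Prop) : A -> Prop := fun a => forall K, Ch K -> K a.
Hypothesis K0 : A -> Prop.
Hypothesis gK0 : good K0.
Hypothesis Hch : forall Ch, (forall K, Ch K -> good K) -> zchain Ch -> (exists K, Ch K) -> good (inter Ch).

Lemma zle_refl K : zle K K. Proof. intros a h; exact h. Qed.
Lemma zle_trans K L M : zle K L -> zle L M -> zle K M. Proof. unfold zle; auto. Qed.
Lemma zle_antisym K L : zle K L -> zle L K -> K = L.
Proof. intros h1 h2; apply pred_ext; intro a; split; auto. Qed.
Lemma zle_inter Ch K : Ch K -> zle K (inter Ch). Proof. intros h a H; apply H; auto. Qed.
Lemma inter_le Ch u : (forall K, Ch K -> zle K u) -> zle (inter Ch) u.
Proof. intros h a ua K CK; apply (h K CK); auto. Qed.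

Theorem zorn_min : exists M, good M /\ forall K, good K -> zle M K -> zle K M.
Proof.
  apply NNPP; intro Hn.
  assert (H : forall M, good M -> exists K, good K /\ zle M K /\ ~ zle K M).
  { intros M gM. apply NNPP; intro h. apply Hn. exists M; split; auto.
    intros K gK le1. apply NNPP; intro h2. apply h. exists K; auto. }
  set (f := fun M => match excluded_middle_informative (good M) with
                     | left g => proj1_sig (constructive_indefinite_description _ (H M g))
                     | right _ => M end).
  assert (finf : forall M, zle M (f M)).
  { intro M; unfold f; destruct (excluded_middle_informative (good M)) as [g|g].
    - destruct (constructive_indefinite_description _ (H M g)) as [K [? [? ?]]]; simpl; auto.
    - apply zle_refl. }
  assert (fgood : forall M, good M -> good (f M) /\ ~ zle (f M) M).
  { intros M g; unfold f; destruct (excluded_middle_informative (good M)) as [g'|g'].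
    - destruct (constructive_indefinite_description _ (H M g')) as [K [? [? ?]]]; simpl; auto.
    - contradiction. }
  set (tower := fun T : (A -> Prop) -> Prop => T K0 /\ (forall K, T K -> T (f K)) /\
         (forall Ch, (forall K, Ch K -> T K) -> zchain Ch -> (exists K, Ch K) -> T (inter Ch))).
  set (Mt := fun K => forall T, tower T -> T K).
  assert (Mtow : tower Mt).
  { split; [|split].
    - intros T [a _]; auto.
    - intros K HK T HT. apply HT. apply HK; auto.
    - intros Ch HC hc ne T HT. apply HT; auto. intros K CK; apply HC; auto. }
  assert (Mgood : forall K, Mt K -> good K).
  { intros K HK. apply HK. split; [auto|split].
    - intros M gM; apply fgood; auto.
    - auto. }
  assert (Mbase : forall K, Mt K -> zle K0 K).
  { intros K HK. apply (HK (fun K => zle K0 K)). split; [apply zle_refl|split].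
    - intros M h; eapply zle_trans; eauto.
    - intros Ch HC _ [K1 C1]. eapply zle_trans; [apply HC; eauto| apply zle_inter; auto]. }
  assert (Mind : forall T, tower (fun K => Mt K /\ T K) -> forall K, Mt K -> T K).
  { intros T HT K HK. apply (HK _ HT). }
  set (ext := fun c => forall x, Mt x -> zle x c -> x <> c -> zle (f x) c).
  assert (Mc : forall c, Mt c -> ext c -> forall x, Mt x -> zle x c \/ zle (f c) x).
  { intros c Hc Ec. apply Mind. unfold tower. split; [|split].
    - split; [apply Mtow | left; apply Mbase; auto].
    - intros K [MK [h | h]]; split; try exact (proj1 (proj2 Mtow) K MK).
      + destruct (classic (K = c)) as [-> | ne].
        * right; apply zle_refl.
        * left; apply Ec; auto.
      + right. eapply zle_trans; eauto.
    - intros Ch HC hc ne. split.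
      + apply (proj2 (proj2 Mtow)); auto. intros K CK; apply HC; auto.
      + destruct (classic (exists K, Ch K /\ zle (f c) K)) as [[K [CK h]] | hn].
        * right. eapply zle_trans; [exact h | apply zle_inter; auto].
        * left. apply inter_le. intros K CK. destruct (proj2 (HC K CK)) as [h|h]; auto.
          exfalso; apply hn; exists K; auto. }
  assert (Eall : forall c, Mt c -> ext c).
  { apply (Mind ext). unfold tower. split; [|split].
    - split; [apply Mtow|]. intros x Mx l ne. exfalso. apply ne. apply zle_antisym; auto.
    - intros c [Mcc Ec]. split; [apply (proj1 (proj2 Mtow)); auto|].
      intros x Mx l ne. destruct (Mc c Mcc Ec x Mx) as [h | h].
      + destruct (classic (x = c)) as [-> | ne2].
        * apply zle_refl.
        * eapply zle_trans; [apply Ec; auto | apply finf].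
      + exfalso; apply ne; apply zle_antisym; auto.
    - intros Ch HC hc [K1 C1]. split.
      + apply (proj2 (proj2 Mtow)); eauto. intros K CK; apply HC; auto.
      + intros x Mx l ne.
        destruct (classic (exists c, Ch c /\ ~ zle (f c) x)) as [[c [Cc nc]] | hn].
        * destruct (HC c Cc) as [Mcc Ec].
          destruct (Mc c Mcc Ec x Mx) as [h | h]; [|contradiction].
          destruct (classic (x = c)) as [-> | ne2].
          --
             destruct (classic (exists d, Ch d /\ ~ zle d c)) as [[d [Cd nd]] | hd].
             ++ destruct (hc c d Cc Cd) as [h1 | h1]; [|contradiction].
                destruct (HC d Cd) as [Md Ed].
                eapply zle_trans; [apply Ed; auto | apply zle_inter; auto].
                intro e; subst; apply nd; apply zle_refl.
             ++ exfalso; apply ne. apply zle_antisym; auto.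
                apply inter_le. intros d Cd. apply NNPP; intro h'; apply hd; eauto.
          -- eapply zle_trans; [apply Ec; auto | apply zle_inter; auto].
        * exfalso. apply ne. apply zle_antisym; auto. apply inter_le. intros c Cc.
          eapply zle_trans; [apply finf|]. apply NNPP; intro h; apply hn; eauto. }
  assert (chainM : zchain Mt).
  { intros x c Mx Mcc. destruct (Mc c Mcc (Eall c Mcc) x Mx) as [h|h]; auto.
    right. eapply zle_trans; [apply finf | exact h]. }
  set (m := inter Mt).
  assert (Mm : Mt m).
  { apply (proj2 (proj2 Mtow)); auto. exists K0; apply (proj1 Mtow). }
  assert (Mfm : Mt (f m)) by (apply (proj1 (proj2 Mtow)); auto).
  destruct (fgood m (Mgood m Mm)) as [_ nle]. apply nle. apply zle_inter; auto.
Qed.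
End Zorn.

Section DcpoFacts.
Variable P : Dcpo.

Lemma single_directed (c : P) : directed (fun d => d = c).
Proof. split; [exists c; auto | intros a b -> ->; exists c; split; auto; split; apply le_refl]. Qed.

Lemma single_sup (c : P) : is_sup (fun d => d = c) c.
Proof. split; [intros d ->; apply le_refl | intros u h; apply h; auto]. Qed.

Lemma wb_le (x y : P) : way_below x y -> le x y.
Proof.
  intro h. destruct (h (fun d => d = y) y (single_directed y) (single_sup y) (le_refl _ y)) as [d [-> l]]; auto.
Qed.

Lemma wb_le_l (a x y : P) : le a x -> way_below x y -> way_below a y.
Proof. intros l h D s HD Hs ys. destruct (h D s HD Hs ys) as [d [Dd xd]]. exists d; split; auto. eapply le_trans; eauto. Qed.

Lemma wb_le_r (x y z : P) : way_below x y -> le y z -> way_below x z.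
Proof. intros h l D s HD Hs zs. apply (h D s HD Hs). eapply le_trans; eauto. Qed.

Lemma sup_le (D : P -> Prop) s u : is_sup D s -> (forall d, D d -> le d u) -> le s u.
Proof. intros [_ h] H; auto. Qed.

Lemma le_sup (D : P -> Prop) s d : is_sup D s -> D d -> le d s.
Proof. intros [h _] H; auto. Qed.

Hypothesis cont : continuous_dcpo P.

Lemma interp (x z : P) : way_below x z -> exists y, way_below x y /\ way_below y z.
Proof.
  intro h.
  set (D := fun a : P => exists b, way_below a b /\ way_below b z).
  assert (HD : directed D).
  { split.
    - destruct (proj1 (cont z)) as [[b bz] _]. destruct (proj1 (cont b)) as [[a ab] _].
      exists a, b; auto.
    - intros a1 a2 [b1 [ab1 bz1]] [b2 [ab2 bz2]].
      destruct (proj2 (proj1 (cont z)) b1 b2 bz1 bz2) as [b3 [bz3 [l1 l2]]].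
      destruct (proj2 (proj1 (cont b3)) a1 a2 (wb_le_r _ _ _ ab1 l1) (wb_le_r _ _ _ ab2 l2)) as [a3 [ab3 [m1 m2]]].
      exists a3; split; [exists b3; auto | auto]. }
  assert (Hs : is_sup D z).
  { split.
    - intros a [b [ab bz]]. eapply le_trans; apply wb_le; eauto.
    - intros u hu. apply (sup_le _ _ u (proj2 (cont z))). intros b bz.
      apply (sup_le _ _ u (proj2 (cont b))). intros a ab. apply hu. exists b; auto. }
  destruct (h D z HD Hs (le_refl _ z)) as [d [[b [db bz]] xd]].
  exists b; split; auto. eapply wb_le_l; eauto.
Qed.

Lemma uparrow_open (y : P) : scott_open (fun z => way_below y z).
Proof.
  split.
  - intros a b h l; eapply wb_le_r; eauto.
  - intros D s HD Hs ys. destruct (interp y s ys) as [m [ym ms]].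
    destruct (ms D s HD Hs (le_refl _ s)) as [d [Dd md]]. exists d; split; auto.
    eapply wb_le_r; eauto.
Qed.
End DcpoFacts.

Lemma downset_closed (P : Dcpo) (s : P) : scott_open (fun z : P => ~ le z s).
Proof.
  split.
  - intros a b h l bs. apply h. eapply le_trans; eauto.
  - intros D t HD Ht ts. apply NNPP; intro hn. apply ts. apply (sup_le P D t s Ht).
    intros d Dd. apply NNPP; intro h; apply hn; eauto.
Qed.

Lemma scott_upward (P : Dcpo) (U : P -> Prop) : scott_open U -> forall x y, U x -> le x y -> U y.
Proof. intros [h _]; auto. Qed.

Lemma scott_sober (P : Dcpo) : continuous_dcpo P -> sober (scott_space P).
Proof.
  intros cont C [HC [[c0 Cc0] Hirr]].
  assert (Cdown : forall x y : P, C y -> le x y -> C x).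
  { intros x y Cy l. apply NNPP; intro h. apply (proj1 HC x y h l). exact Cy. }
  assert (Csup : forall (D : P -> Prop) s, directed D -> is_sup D s -> (forall d, D d -> C d) -> C s).
  { intros D s HD Hs h. apply NNPP; intro n. destruct (proj2 HC D s HD Hs n) as [d [Dd nd]]. apply nd; auto. }
  set (D := fun y : P => exists c, C c /\ way_below y c).
  assert (HD : directed D).
  { split.
    - destruct (proj1 (cont c0)) as [[y yc] _]. exists y, c0; auto.
    - intros y1 y2 [c1 [C1 w1]] [c2 [C2 w2]].
      assert (hc : exists c, C c /\ way_below y1 c /\ way_below y2 c).
      { apply NNPP; intro hn.
        destruct (Hirr (fun z => ~ way_below y1 z) (fun z => ~ way_below y2 z)) as [h|h].
        - apply closed_compl. apply uparrow_open; auto.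
        - apply closed_compl. apply uparrow_open; auto.
        - intros x Cx. apply NNPP; intro h. apply hn. exists x. split; auto.
          split; apply NNPP; intro h'; apply h; auto.
        - apply (h c1); auto.
        - apply (h c2); auto. }
      destruct hc as [c [Cc [a1 a2]]].
      destruct (proj2 (proj1 (cont c)) y1 y2 a1 a2) as [y3 [w3 [l1 l2]]].
      exists y3; split; auto. exists c; auto. }
  destruct (dcpo_complete P D HD) as [s Hs].
  assert (Cs : C s).
  { apply (Csup D s HD Hs). intros d [c [Cc w]]. eapply Cdown; eauto. apply wb_le; auto. }
  assert (pc_le : forall x z : P, @point_closure (scott_space P) x z -> le z x).
  { intros x z h. apply (h (fun z => le z x)).
    - unfold is_closed. apply (scott_ext P (fun z => ~ le z x)).
      + intro; tauto.
      + apply downset_closed.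
    - apply le_refl. }
  assert (gen : forall z, C z <-> @point_closure (scott_space P) s z).
  { intro z; split.
    - intros Cz C' HC' C's. apply NNPP; intro n.
      assert (zs : le z s).
      { apply (sup_le P _ _ s (proj2 (cont z))). intros y yz. apply (le_sup P D s y Hs). exists z; auto. }
      apply (proj1 HC' z s n zs C's).
    - intro h. apply h; auto. }
  exists s; split; auto.
  intros x' gx'. apply le_antisym.
  - apply pc_le. apply gen. apply gx'. intros C' _ h; exact h.
  - apply pc_le. apply gx'. exact Cs.
Qed.

Lemma scott_lc (P : Dcpo) : continuous_dcpo P -> locally_compact (scott_space P).
Proof.
  intros cont x U HU Ux.
  destruct (proj2 HU _ x (proj1 (cont x)) (proj2 (cont x)) Ux) as [y [yx Uy]].
  exists (fun z : P => le y z). split; [|split; [|split]].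
  - intros F HF Hc. destruct (Hc y (le_refl _ y)) as [W [FW Wy]].
    exists (W :: nil). split.
    + intros W' [<- | []]; auto.
    + intros z yz. exists W; split; [left; auto|]. apply (scott_upward P W (HF W FW) y z); auto.
  - intros z hz. apply NNPP; intro n. apply (hz (fun w => ~ le w z)).
    + apply downset_closed.
    + intros w yw wz. apply n. eapply le_trans; eauto.
    + apply le_refl.
  - intros z yz. apply (scott_upward P U HU y z); auto.
  - exists (fun z => way_below y z). split; [apply uparrow_open; auto|]. split; auto.
    intros z h; apply wb_le; auto.
Qed.

Lemma homeo_refl_sub (X : Top) : homeomorphic X (subspace X (fun _ => True)).
Proof.
  exists (fun x => exist _ x I), (fun s => proj1_sig s).
  split; [|split; [|split]].
  - intros V [V' [HV' h]]. apply (open_ext X V'); auto. intro x; rewrite (h (exist _ x I)); tauto.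
  - intros V HV. exists V; split; auto. intro; tauto.
  - auto.
  - intros [y []]; reflexivity.
Qed.

Lemma G_delta_True (X : Top) : G_delta (fun _ : X => True).
Proof. exists (fun _ _ => True). split; [intro; apply open_full | intro; split; auto]. Qed.

Lemma scott_domain_complete (P : Dcpo) : continuous_dcpo P -> domain_complete (scott_space P).
Proof.
  intro c. exists P, (fun _ => True). split; auto. split; [apply G_delta_True | apply homeo_refl_sub].
Qed.

Lemma domain_LCS (X : Top) : domain_complete X -> LCS_complete X.
Proof.
  intros [P [A [c [g h]]]]. exists (scott_space P), A. split; [apply scott_lc; auto|].
  split; [apply scott_sober; auto|]. auto.
Qed.

Lemma compact_elems_cont (P : Dcpo) : (forall x : P, way_below x x) -> continuous_dcpo P.
Proof.
  intros h x. split.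
  - split; [exists x; auto|]. intros a b wa wb'. exists x; split; auto. split; apply wb_le; auto.
  - split; [intros d; apply wb_le|]. intros u hu; apply hu; auto.
Qed.

Section Embed.
Variables X Y : Top.
Variable e : X -> Y.
Hypothesis e1 : forall V, is_open V -> is_open (fun x => V (e x)).
Hypothesis e2 : forall U, is_open U -> exists V, is_open V /\ forall x, U x <-> V (e x).
Hypothesis e3 : forall x x', e x = e x' -> x = x'.
Variable Un : nat -> Y -> Prop.
Hypothesis Uopen : forall n, is_open (Un n).
Hypothesis e4 : forall y, (forall n, Un n y) -> exists x, e x = y.
Hypothesis e5 : forall x n, Un n (e x).
Hypothesis soberY : sober Y.

Lemma pre_closed (D : Y -> Prop) : is_closed D -> is_closed (fun x => D (e x)).
Proof. intro h. apply e1 in h. exact h. Qed.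

Lemma closed_pre (D : X -> Prop) : is_closed D -> exists D', is_closed D' /\ forall x, D x <-> D' (e x).
Proof.
  intro h. destruct (e2 _ h) as [V [HV HVe]]. exists (fun y => ~ V y). split.
  - apply closed_compl; auto.
  - intro x. rewrite <- HVe. split; [tauto | apply NNPP].
Qed.

Lemma embed_sober : sober X.
Proof.
  intros C [HC [[c0 Cc0] Hirr]].
  set (Cl := fun y => forall V, is_open V -> V y -> exists c, C c /\ V (e c)).
  assert (Clc : is_closed Cl).
  { unfold is_closed.
    apply (open_ext Y (fun y => exists V, (fun V => is_open V /\ forall c, C c -> ~ V (e c)) V /\ V y)).
    - intro y; split.
      + intros [V [[HV h] Vy]] hc. destruct (hc V HV Vy) as [c [Cc Vc]]. apply (h c); auto.
      + intro n. unfold Cl in n. apply not_all_ex_not in n as [V n].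
        apply imply_to_and in n as [HV n]. apply imply_to_and in n as [Vy n].
        exists V; split; auto. split; auto. intros c Cc Vc; apply n; eauto.
    - apply open_union. intros V [h _]; auto. }
  assert (Clmin : forall D, is_closed D -> (forall c, C c -> D (e c)) -> forall y, Cl y -> D y).
  { intros D HD h y Cly. apply NNPP; intro n. destruct (Cly _ HD n) as [c [Cc nc]]. apply nc; auto. }
  assert (Cle : forall c, C c -> Cl (e c)).
  { intros c Cc V _ Vc; exists c; auto. }
  assert (push : forall x, (forall z, C z <-> point_closure x z) -> forall w, Cl w <-> point_closure (e x) w).
  { intros x gx w; split.
    - intros Clw D HD Dx. apply (Clmin D HD); auto. intros c Cc.
      apply (proj1 (gx c) Cc (fun x => D (e x))); auto. apply pre_closed; auto.
    - intro h. apply h; auto. apply Cle. apply gx. intros D _ h'; exact h'. }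
  assert (irr : irreducible_closed Cl).
  { split; auto. split; [exists (e c0); auto|].
    intros C1 C2 H1 H2 hcov.
    destruct (Hirr (fun x => C1 (e x)) (fun x => C2 (e x))) as [h | h].
    - apply pre_closed; auto.
    - apply pre_closed; auto.
    - intros x Cx; apply hcov; auto.
    - left; apply Clmin; auto.
    - right; apply Clmin; auto. }
  destruct (soberY Cl irr) as [y [gy uy]].
  assert (yU : forall n, Un n y).
  { intro n. apply NNPP; intro h.
    assert (hc : point_closure y (e c0)) by (apply (proj1 (gy (e c0))); apply Cle; auto).
    apply (hc (fun w => ~ Un n w)); auto. apply closed_compl; auto. }
  destruct (e4 y yU) as [x <-].
  assert (Cx : C x).
  { destruct (closed_pre C HC) as [D' [HD' hD']]. apply hD'.
    apply (Clmin D' HD'). intros c Cc; apply hD'; auto.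
    apply gy. intros D _ h; exact h. }
  assert (gx : forall z, C z <-> point_closure x z).
  { intro z; split.
    - intros Cz D HD Dx. destruct (closed_pre D HD) as [D' [HD' hD']]. apply hD'.
      apply (proj1 (gy (e z)) (Cle z Cz) D' HD'). apply hD'; auto.
    - intro h; apply h; auto. }
  exists x; split; [exact gx|].
  intros x' gx'. apply e3. apply uy. apply push; auto.
Qed.
End Embed.

Lemma homeo_sub_sober (X Y : Top) (A : Y -> Prop) :
  sober Y -> G_delta A -> homeomorphic X (subspace Y A) -> sober X.
Proof.
  intros sY [Un [Uo hA]] [f [g [cf [cg [gf fg]]]]].
  apply (embed_sober X Y (fun x => proj1_sig (f x)) ) with (Un := Un); auto.
  - intros V HV. apply (cf (fun s => V (proj1_sig s))). exists V; split; auto. intro; tauto.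
  - intros U HU. destruct (cg U HU) as [V [HV h]]. exists V; split; auto.
    intro x. rewrite <- h. rewrite gf. tauto.
  - intros x x' h. rewrite <- (gf x), <- (gf x'). f_equal.
    destruct (f x) as [a pa], (f x') as [b pb]. simpl in h. subst b.
    f_equal. apply proof_irrelevance.
  - intros y hy. assert (Ay : A y) by (apply hA; auto).
    exists (g (exist _ y Ay)). rewrite fg. reflexivity.
  - intros x n. apply hA. exact (proj2_sig (f x)).
Qed.

Lemma closed_inter2 (X : Top) (C1 C2 : X -> Prop) : is_closed C1 -> is_closed C2 -> is_closed (fun y => C1 y /\ C2 y).
Proof.
  intros h1 h2. unfold is_closed. apply (open_ext X (fun y => ~ C1 y \/ ~ C2 y)).
  - intro y; tauto.
  - apply open_union2; auto.
Qed.

Lemma cc_sober_lc (X : Top) : core_compact X -> sober X -> locally_compact X.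
Proof.
  intros cc sob x U HU Ux.
  destruct (cc U HU x Ux) as [V [HV [Vx VU]]].
  set (step := fun W : X -> Prop =>
    match excluded_middle_informative (is_open W /\ wb V W) with
    | left h => proj1_sig (constructive_indefinite_description _ (wb_interp X cc V W (proj1 h) (proj2 h)))
    | right _ => W end).
  assert (stepP : forall W, is_open W -> wb V W -> is_open (step W) /\ wb V (step W) /\ wb (step W) W).
  { intros W h1 h2. unfold step. destruct (excluded_middle_informative (is_open W /\ wb V W)) as [h|h].
    - destruct (constructive_indefinite_description _ _) as [W' HW']; simpl; auto.
    - exfalso; auto. }
  set (W := fun n => Nat.iter n step U).
  assert (WP : forall n, is_open (W n) /\ wb V (W n)).
  { induction n as [|n [IH1 IH2]]; [split; auto|].
    simpl. destruct (stepP _ IH1 IH2) as [a [b _]]; split; auto. }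
  assert (WS : forall n, wb (W (S n)) (W n)).
  { intro n. destruct (WP n) as [a b]. exact (proj2 (proj2 (stepP _ a b))). }
  assert (Wdec : forall m n, m <= n -> forall y, W n y -> W m y).
  { intros m n l. induction l; auto. intros y h. apply IHl. apply (wb_sub X (W (S m0)) (W m0)); auto.
    apply WP. }
  set (Q := fun y => forall n, W n y).
  assert (HM : forall O, is_open O -> (forall y, Q y -> O y) -> exists n, forall y, W n y -> O y).
  { intros O HO QO. apply NNPP; intro Hn.
    assert (Hn' : forall n, exists z, W n z /\ ~ O z).
    { intro n. apply NNPP; intro h. apply Hn. exists n. intros y Wy. apply NNPP; intro no. apply h; eauto. }
    set (good := fun K : X -> Prop => is_closed K /\ (forall y, K y -> ~ O y) /\ forall n, exists z, K z /\ W n z).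
    assert (gK0 : good (fun y => ~ O y)).
    { split; [apply closed_compl; auto|]. split; auto. intro n. destruct (Hn' n) as [z [a b]]; eauto. }
    assert (Hch : forall Ch, (forall K, Ch K -> good K) -> zchain X Ch -> (exists K, Ch K) -> good (inter X Ch)).
    { intros Ch HC hc [K1 C1]. split; [|split].
      - unfold is_closed.
        apply (open_ext X (fun y => exists G, (fun G => exists K, Ch K /\ G = (fun y => ~ K y)) G /\ G y)).
        + intro y; split.
          * intros [G [[K [CK ->]] nK]] hi. apply nK, hi; auto.
          * intro n. unfold inter in n. apply not_all_ex_not in n as [K n]. apply imply_to_and in n as [CK n].
            exists (fun y => ~ K y). split; eauto.
        + apply open_union. intros G [K [CK ->]]. apply (HC K CK).
      - intros y hy. apply (proj1 (proj2 (HC K1 C1))). apply hy; auto.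
      - intro n. apply NNPP; intro hn.
        destruct (WS n (fun G => exists K, Ch K /\ G = (fun y => ~ K y))) as [G [[K [CK ->]] hG]].
        + intros G [K [CK ->]]. apply (HC K CK).
        + split; [exists (fun y => ~ K1 y); eauto|].
          intros G1 G2 [Ka [Ca ->]] [Kb [Cb ->]]. destruct (hc Ka Kb Ca Cb) as [l | l].
          * exists (fun y => ~ Kb y). split; [eauto|]. split; [intros y na yb; apply na, l, yb | auto].
          * exists (fun y => ~ Ka y). split; [eauto|]. split; [auto | intros y nb ya; apply nb, l, ya].
        + intros y Wy. apply NNPP; intro h. apply hn. exists y. split; auto.
          intros K CK. apply NNPP; intro nK. apply h. exists (fun y => ~ K y); split; eauto.
        + destruct (proj2 (proj2 (HC K CK)) (S n)) as [z [Kz Wz]]. apply (hG z Wz Kz). }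
    destruct (zorn_min X good (fun y => ~ O y) gK0 Hch) as [M [[HMc [MO Mmeet]] Mmin]].
    assert (irr : irreducible_closed M).
    { split; auto. split; [destruct (Mmeet 0) as [z [Mz _]]; eauto|].
      intros C1 C2 H1 H2 hcov.
      destruct (classic (good (fun y => M y /\ C1 y))) as [g1 | g1].
      - left. intros y My. apply (Mmin _ g1); auto. intros a [h _]; exact h.
      - destruct (classic (good (fun y => M y /\ C2 y))) as [g2 | g2].
        + right. intros y My. apply (Mmin _ g2); auto. intros a [h _]; exact h.
        + exfalso.
          assert (n1 : exists n, ~ exists z, (M z /\ C1 z) /\ W n z).
          { apply NNPP; intro h. apply g1. split; [apply closed_inter2; auto|]. split.
            - intros y [My _]; auto.
            - intro n. apply NNPP; intro h'. apply h; eauto. }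
          assert (n2 : exists n, ~ exists z, (M z /\ C2 z) /\ W n z).
          { apply NNPP; intro h. apply g2. split; [apply closed_inter2; auto|]. split.
            - intros y [My _]; auto.
            - intro n. apply NNPP; intro h'. apply h; eauto. }
          destruct n1 as [a na], n2 as [b nb].
          destruct (Mmeet (Nat.max a b)) as [z [Mz Wz]].
          destruct (hcov z Mz) as [c | c].
          * apply na. exists z. split; auto. apply (Wdec a (Nat.max a b)); auto; lia.
          * apply nb. exists z. split; auto. apply (Wdec b (Nat.max a b)); auto; lia. }
    destruct (sob M irr) as [p [gp _]].
    assert (Qp : Q p).
    { intro n. apply NNPP; intro np. destruct (Mmeet n) as [z [Mz Wz]].
      apply (proj1 (gp z) Mz (fun y => ~ W n y)); auto. apply closed_compl. apply WP. }
    apply (MO p). apply gp. intros D _ h; exact h. apply QO; auto. }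
  exists Q. split; [|split; [|split]].
  - intros F HF cov.
    destruct (HM (fun y => exists U', F U' /\ U' y)) as [n hn].
    + apply open_union; auto.
    + auto.
    + destruct (WS n (fun G => exists l, (forall U', In U' l -> F U') /\ forall y, G y <-> exists U', In U' l /\ U' y))
        as [G [[l [lF hl]] hG]].
      * intros G [l [lF hl]]. apply (open_ext X (fun y => exists U', (fun U' => In U' l) U' /\ U' y)).
        -- intro y; rewrite hl; tauto.
        -- apply open_union. intros U1 h; apply HF, lF; auto.
      * split.
        -- exists (fun _ => False), nil. split; [intros U' []|]. intro y; split; [intros []|intros [U' [[] _]]].
        -- intros G1 G2 [l1 [f1 h1]] [l2 [f2 h2]]. exists (fun y => exists U', In U' (l1 ++ l2) /\ U' y).
           split; [exists (l1 ++ l2); split; [|tauto]|].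
           ++ intros U1 h; apply in_app_or in h as [h|h]; auto.
           ++ split.
              ** intros y h. apply h1 in h as [U1 [i u]]. exists U1; split; auto. apply in_or_app; auto.
              ** intros y h. apply h2 in h as [U1 [i u]]. exists U1; split; auto. apply in_or_app; auto.
      * intros y Wy. destruct (hn y Wy) as [U1 [FU1 U1y]].
        exists (fun y => exists U', In U' (U1 :: nil) /\ U' y). split; [exists (U1 :: nil); split; [|tauto]|].
        -- intros U2 [<- | []]; auto.
        -- exists U1; split; [left|]; auto.
      * exists l. split; auto. intros y Qy. apply hl. apply hG. apply Qy.
  - intros y hy n. apply hy; [apply WP | intros z Qz; apply Qz].
  - intros y Qy. apply (Qy 0).
  - exists V. split; auto. split; auto. intros y Vy n. apply (wb_sub X V (W n)); auto; apply WP.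
Qed.

Definition BoolD : Dcpo.
Proof.
  refine {| dcarrier := bool; le := fun b1 b2 => b1 = true -> b2 = true |}.
  - auto.
  - auto.
  - intros [] [] h1 h2; auto; first [symmetry; apply h1; auto | apply h2; auto].
  - intros D HD. destruct (classic (exists d, D d /\ d = true)) as [[d [Dd ->]] | hn].
    + exists true. split; auto. intros u hu; apply (hu true); auto.
    + exists false. split.
      * intros d Dd h. subst d. exfalso; apply hn; eauto.
      * intros u _ h; discriminate.
Defined.

Definition UnitD : Dcpo.
Proof.
  refine {| dcarrier := unit; le := fun _ _ => True |}; auto.
  - intros [] [] _ _; auto.
  - intros D _. exists tt; auto.
Defined.

Definition PowD (T : Type) : Dcpo.
Proof.
  refine {| dcarrier := T -> Prop; le := fun S1 S2 => forall a, S1 a -> S2 a |}; auto.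
  - intros S1 S2 h1 h2; apply pred_ext; intro a; split; auto.
  - intros D HD. exists (fun a => exists d, D d /\ d a). split.
    + intros d Dd a da; eauto.
    + intros u hu a [d [Dd da]]. apply (hu d Dd); auto.
Defined.

Lemma BoolD_cont : continuous_dcpo BoolD.
Proof.
  apply compact_elems_cont. intros [|] D s HD Hs ts.
  - apply NNPP; intro hn. assert (h : @le BoolD s false).
    { apply (sup_le BoolD D s false Hs). intros d Dd hd. exfalso; apply hn. exists d; split; auto. simpl; auto. }
    simpl in ts, h. discriminate (h (ts eq_refl)).
  - destruct (proj1 HD) as [d Dd]. exists d; split; auto. simpl; intro h; discriminate.
Qed.

Lemma UnitD_cont : continuous_dcpo UnitD.
Proof.
  apply compact_elems_cont. intros [] D s HD Hs ts. destruct (proj1 HD) as [d Dd]. exists d; split; simpl; auto.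
Qed.

Lemma PowD_cont (T : Type) : continuous_dcpo (PowD T).
Proof.
  intros S.
  assert (wbU : forall A B, way_below A S -> way_below B S -> @way_below (PowD T) (fun a => A a \/ B a) S).
  { intros A B hA hB D s HD Hs Ss. destruct (hA D s HD Hs Ss) as [d1 [D1 l1]].
    destruct (hB D s HD Hs Ss) as [d2 [D2 l2]]. destruct (proj2 HD d1 d2 D1 D2) as [d3 [D3 [m1 m2]]].
    exists d3; split; auto. intros a [h|h]; [apply m1, l1 | apply m2, l2]; auto. }
  assert (wbS : forall a, S a -> @way_below (PowD T) (fun b => b = a) S).
  { intros a Sa D s HD Hs Ss.
    assert (h : (fun b => exists d, D d /\ d b) a).
    { apply (sup_le (PowD T) D s (fun b => exists d, D d /\ d b) Hs); [|apply Ss; auto].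
      intros d Dd b db; eauto. }
    destruct h as [d [Dd da]]. exists d; split; auto. intros b ->; auto. }
  split; [split|split].
  - exists (fun _ => False). intros D s HD Hs Ss. destruct (proj1 HD) as [d Dd]. exists d; split; auto.
    intros a [].
  - intros A B hA hB. exists (fun a => A a \/ B a). split; [apply wbU; auto|]. split; simpl; auto.
  - intros d h. apply wb_le; auto.
  - intros u hu a Sa. apply (hu (fun b => b = a)); auto.
Qed.

Definition Sier : Top := scott_space BoolD.
Definition One : Top := scott_space UnitD.
Definition PowSp (X : Top) : Top := scott_space (PowD (X -> Prop)).

Definition chi (P : Prop) : bool := if excluded_middle_informative P then true else false.
Lemma chi_true P : chi P = true <-> P.
Proof. unfold chi; destruct (excluded_middle_informative P); split; intro h; auto; try discriminate; contradiction. Qed.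
Lemma chi_ext P Q : (P <-> Q) -> chi P = chi Q.
Proof. intro h; rewrite (propositional_extensionality P Q h); auto. Qed.

Lemma true_open : @is_open Sier (fun b => b = true).
Proof.
  split.
  - intros a b h l; apply l; auto.
  - intros D s HD Hs ->. apply NNPP; intro hn.
    assert (h : @le BoolD true false).
    { apply (sup_le BoolD D true false Hs). intros d Dd hd. exfalso; apply hn; eauto. }
    simpl in h. discriminate (h eq_refl).
Qed.

Lemma cont_sier (T : Top) (f : T -> Sier) : is_open (fun t => f t = true) -> continuous f.
Proof.
  intros h V HV. destruct (classic (V false)) as [Vf | nVf].
  - apply (open_ext T (fun _ => True)); [|apply open_full].
    intro t; split; auto. intros _. destruct (f t); auto.
    apply (scott_upward BoolD V HV false true); auto. simpl; auto.
  - destruct (classic (V true)) as [Vt | nVt].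
    + apply (open_ext T (fun t => f t = true)); auto.
      intro t; split; [intros ->; auto|]. destruct (f t); auto.
    + apply (open_ext T (fun _ => False)); [|apply open_empty].
      intro t; split; [intros []|]. destruct (f t); auto.
Qed.

Lemma cont_const (T T' : Top) (c : T') : continuous (fun _ : T => c).
Proof. intros V _. apply open_const. Qed.

Lemma mem_open (X : Top) (W : X -> Prop) : @is_open (PowSp X) (fun S => S W).
Proof.
  split.
  - intros a b h l; apply l; auto.
  - intros D s HD Hs sW.
    assert (h : (fun b => exists d, D d /\ d b) W).
    { apply (sup_le (PowD (X -> Prop)) D s (fun b => exists d, D d /\ d b) Hs); [|auto].
      intros d Dd b db; eauto. }
    destruct h as [d [Dd dW]]; eauto.
Qed.

Lemma exp_core (C : Top -> Prop) (X : Top) :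
  C Sier -> C One -> C (PowSp X) -> exponentiable C X -> core_compact X.
Proof.
  intros CS C1 CP ex. destruct (ex Sier CS) as [E [ev [CE [cev univ]]]].
  intros U HU x Ux.
  set (fU := fun p : prod_top One X => chi (U (snd p)) : Sier).
  assert (cfU : continuous fU).
  { apply cont_sier. intros p hp. unfold fU in hp. apply (proj1 (chi_true _)) in hp.
    exists (fun _ => True), U. split; [apply open_full|]. split; [exact HU|]. split; [exact I|]. split; [exact hp|].
    intros z y _ Uy. unfold fU; simpl. apply (proj2 (chi_true _)); auto. }
  destruct (univ One fU C1 cfU) as [gU [cgU [hgU uU]]].
  set (e := gU tt).
  assert (he : ev (e, x) = true).
  { unfold e. rewrite <- hgU. unfold fU; simpl. apply (proj2 (chi_true _)); auto. }
  destruct (cev _ true_open (e, x) he) as [Wc [V [HWc [HV [We [Vx rect]]]]]].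
  exists V. split; auto. split; auto.
  intros F HF HD cov.
  set (f2 := fun p : prod_top (PowSp X) X => chi (U (snd p) /\ exists W, fst p W /\ F W /\ W (snd p)) : Sier).
  assert (cf2 : continuous f2).
  { apply cont_sier. intros [S y] hp. unfold f2 in hp. apply (proj1 (chi_true _)) in hp. simpl in hp.
    destruct hp as [Uy [W [SW [FW Wy]]]].
    exists (fun S' : PowSp X => S' W), (fun y => U y /\ W y). split; [apply mem_open|].
    split; [apply open_inter; auto|]. split; auto. split; auto.
    intros S' y' h1 [h2 h3]. unfold f2; simpl. apply (proj2 (chi_true _)). split; eauto. }
  destruct (univ (PowSp X) f2 CP cf2) as [g2 [cg2 [hg2 _]]].
  set (Full := (fun _ : X -> Prop => True) : PowSp X).
  assert (gF : g2 Full = e).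
  { unfold e. apply (uU (fun _ => g2 Full)); [apply cont_const|].
    intros z y. rewrite <- hg2. unfold fU, f2; simpl. apply chi_ext. split.
    - intro Uy; split; auto. destruct (cov y Uy) as [W [FW Wy]]. exists W; unfold Full; auto.
    - tauto. }
  set (D' := fun S : PowD (X -> Prop) => exists k, F k /\ S = (fun W => F W -> forall y, W y -> k y)).
  assert (HD' : directed D').
  { split.
    - destruct (proj1 HD) as [k Fk]. exists (fun W => F W -> forall y, W y -> k y). exists k; auto.
    - intros a b [k1 [F1 ->]] [k2 [F2 ->]]. destruct (proj2 HD k1 k2 F1 F2) as [k3 [F3 [l1 l2]]].
      exists (fun W => F W -> forall y, W y -> k3 y). split; [exists k3; auto|].
      split; simpl; intros W h FW y Wy; eauto. }
  assert (HsD : is_sup D' Full).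
  { split.
    - intros d _ a _; exact I.
    - intros u hu W _. destruct (classic (F W)) as [FW | nFW].
      + apply (hu (fun W' => F W' -> forall y, W' y -> W y)); [exists W; auto|]. auto.
      + destruct (proj1 HD) as [k Fk]. apply (hu (fun W' => F W' -> forall y, W' y -> k y)); [exists k; auto|].
        intro; contradiction. }
  assert (WF : Wc (g2 Full)) by (rewrite gF; auto).
  destruct (proj2 (cg2 Wc HWc) D' Full HD' HsD WF) as [S [[k [Fk ->]] WS]].
  exists k; split; auto. intros y Vy.
  assert (h : ev (g2 (fun W => F W -> forall y, W y -> k y), y) = true) by (apply rect; auto).
  rewrite <- hg2 in h. unfold f2 in h; simpl in h. apply (proj1 (chi_true _)) in h.
  destruct h as [_ [W [h1 [FW Wy]]]]. apply (h1 FW); auto.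
Qed.

Definition PfD : Dcpo.
Proof.
  refine {| dcarrier := nat -> option nat;
            le := fun p q => forall n v, p n = Some v -> q n = Some v |}.
  - auto.
  - auto.
  - intros p q h1 h2. apply functional_extensionality; intro n.
    destruct (p n) as [v|] eqn:E; [symmetry; apply h1; auto|].
    destruct (q n) as [w|] eqn:F; auto. rewrite (h2 n w F) in E; discriminate.
  - intros D HD.
    assert (Hn : forall n, exists o : option nat, forall v, o = Some v <-> exists d, D d /\ d n = Some v).
    { intro n. destruct (classic (exists d v, D d /\ d n = Some v)) as [[d [v [Dd dv]]] | hn].
      - exists (Some v). intro w; split.
        + intro h; injection h as <-; eauto.
        + intros [d' [Dd' dw]]. destruct (proj2 HD d d' Dd Dd') as [c [Dc [l1 l2]]].
          pose proof (l1 n v dv) as e1. apply (l2 n w) in dw. congruence.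
      - exists None. intro w; split; [discriminate|]. intros [d [Dd dw]]. exfalso; eauto. }
    exists (fun n => proj1_sig (constructive_indefinite_description _ (Hn n))). split.
    + intros d Dd n v h. destruct (constructive_indefinite_description _ (Hn n)) as [o ho]; simpl.
      apply ho; eauto.
    + intros u hu n v. destruct (constructive_indefinite_description _ (Hn n)) as [o ho]; simpl.
      intro h. apply ho in h as [d [Dd dv]]. apply (hu d Dd); auto.
Defined.

Lemma sup_point (D : PfD -> Prop) s n v : is_sup D s -> s n = Some v -> exists d, D d /\ d n = Some v.
Proof.
  intros Hs h. apply NNPP; intro hn.
  set (u := (fun m => if Nat.eqb m n then None else s m) : PfD).
  assert (l : le s u).
  { apply (sup_le PfD D s u Hs). intros d Dd m w dw. unfold u.
    destruct (Nat.eqb_spec m n) as [-> | ne].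
    - exfalso. pose proof (le_sup PfD D s d Hs Dd n w dw) as e. rewrite h in e. injection e as <-. eauto.
    - apply (le_sup PfD D s d Hs Dd m w dw). }
  pose proof (l n v h) as e. unfold u in e. rewrite Nat.eqb_refl in e. discriminate.
Qed.

Definition rr (k : nat) (x : PfD) : PfD := fun n => if Nat.ltb n k then x n else None.

Lemma rr_le_x k x : @le PfD (rr k x) x.
Proof. intros n v. unfold rr. destruct (Nat.ltb n k); [auto|discriminate]. Qed.

Lemma rr_mono k k' x : k <= k' -> @le PfD (rr k x) (rr k' x).
Proof.
  intros l n v. unfold rr. destruct (Nat.ltb_spec n k); [|discriminate].
  destruct (Nat.ltb_spec n k'); [auto|lia].
Qed.

Lemma rr_wb k x : @way_below PfD (rr k x) x.
Proof.
  induction k.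
  - intros D s HD Hs xs. destruct (proj1 HD) as [d Dd]. exists d; split; auto. intros n v. unfold rr. simpl. discriminate.
  - intros D s HD Hs xs. destruct (IHk D s HD Hs xs) as [d1 [D1 l1]].
    destruct (x k) as [v|] eqn:E.
    + destruct (sup_point D s k v Hs (xs k v E)) as [d2 [D2 e2]].
      destruct (proj2 HD d1 d2 D1 D2) as [d3 [D3 [m1 m2]]].
      exists d3; split; auto. intros n w. unfold rr. destruct (Nat.ltb_spec n (S k)); [|discriminate].
      intro h. destruct (Nat.eq_dec n k) as [-> | ne].
      * rewrite E in h; injection h as <-. apply m2; auto.
      * apply m1, l1. unfold rr. destruct (Nat.ltb_spec n k); [auto|lia].
    + exists d1; split; auto. intros n w. unfold rr. destruct (Nat.ltb_spec n (S k)); [|discriminate].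
      intro h. destruct (Nat.eq_dec n k) as [-> | ne].
      * congruence.
      * apply l1. unfold rr. destruct (Nat.ltb_spec n k); [auto|lia].
Qed.

Lemma rr_dir x : directed (fun d : PfD => exists k, d = rr k x).
Proof.
  split; [exists (rr 0 x); eauto|]. intros a b [k1 ->] [k2 ->]. exists (rr (Nat.max k1 k2) x).
  split; [eauto|]. split; apply rr_mono; lia.
Qed.

Lemma rr_sup x : is_sup (fun d : PfD => exists k, d = rr k x) x.
Proof.
  split.
  - intros d [k ->]. apply rr_le_x.
  - intros u hu n v h. apply (hu (rr (S n) x)); eauto. unfold rr. destruct (Nat.ltb_spec n (S n)); [auto|lia].
Qed.

Lemma PfD_cont : continuous_dcpo PfD.
Proof.
  intro x.
  assert (below : forall y, way_below y x -> exists k, le y (rr k x)).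
  { intros y h. destruct (h _ x (rr_dir x) (rr_sup x) (le_refl _ x)) as [d [[k ->] l]]. eauto. }
  split; [split|split].
  - exists (rr 0 x). apply rr_wb.
  - intros a b ha hb. destruct (below a ha) as [k1 l1], (below b hb) as [k2 l2].
    exists (rr (Nat.max k1 k2) x). split; [apply rr_wb|]. split.
    + eapply le_trans; [exact l1|]. apply rr_mono; lia.
    + eapply le_trans; [exact l2|]. apply rr_mono; lia.
  - intros d h; apply wb_le; auto.
  - intros u hu. apply (sup_le PfD _ x u (rr_sup x)). intros d [k ->]. apply hu, rr_wb.
Qed.

Definition total (p : scott_space PfD) : Prop := forall n, exists v, p n = Some v.
Definition Baire : Top := subspace (scott_space PfD) total.

Lemma homeo_refl (X : Top) : homeomorphic X X.
Proof.
  exists (fun x => x), (fun x => x). split; [|split; [|split]]; auto; intros V HV; exact HV.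
Qed.

Lemma Baire_dc : domain_complete Baire.
Proof.
  exists PfD, total. split; [apply PfD_cont|]. split; [|apply homeo_refl].
  exists (fun n (p : scott_space PfD) => exists v, p n = Some v). split.
  - intro n. split.
    + intros a b [v h] l. exists v; apply l; auto.
    + intros D s HD Hs [v h]. destruct (sup_point D s n v Hs h) as [d [Dd dv]]. eauto.
  - intro x; unfold total; tauto.
Qed.

Lemma Baire_not_lc : ~ locally_compact Baire.
Proof.
  intro lc.
  set (c0 := (fun _ => Some 0) : PfD).
  assert (tc0 : total c0) by (intro n; exists 0; auto).
  destruct (lc (exist _ c0 tc0) (fun _ => True) (open_full Baire) I) as [Q [cQ [_ [_ [V [[V' [HV' hV]] [Vx VQ]]]]]]].
  apply hV in Vx. simpl in Vx.
  destruct (proj2 HV' _ c0 (rr_dir c0) (rr_sup c0) Vx) as [d [[k ->] Vk]].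
  set (tp := fun j => (fun n => if Nat.eqb n k then Some j else Some 0) : PfD).
  assert (ttp : forall j, total (tp j)).
  { intros j n; unfold tp; destruct (Nat.eqb n k); eauto. }
  set (Oj := fun j => fun s : Baire => proj1_sig s k = Some j).
  set (N := fun s : Baire => exists i v, i < k /\ proj1_sig s i = Some v /\ v <> 0).
  set (F := fun W => (exists j, W = Oj j) \/ W = N).
  destruct (cQ F) as [l [lF lcov]].
  - intros W [[j ->] | ->].
    + exists (fun p : scott_space PfD => p k = Some j). split; [|intro; unfold Oj; tauto].
      split.
      * intros a b h l. apply l; auto.
      * intros D s HD Hs h. destruct (sup_point D s k j Hs h) as [d' [Dd dv]]; eauto.
    + exists (fun p : scott_space PfD => exists i v, i < k /\ p i = Some v /\ v <> 0). split; [|intro; unfold N; tauto].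
      split.
      * intros a b [i [v [h1 [h2 h3]]]] l. exists i, v; repeat split; auto.
      * intros D s HD Hs [i [v [h1 [h2 h3]]]]. destruct (sup_point D s i v Hs h2) as [d' [Dd dv]].
        exists d'; split; auto. exists i, v; auto.
  - intros [p tp'] _. destruct (classic (N (exist _ p tp'))) as [hN | hN].
    + exists N; split; auto. right; auto.
    + destruct (tp' k) as [j hj]. exists (Oj j). split; [left; eauto|]. unfold Oj; simpl; auto.
  - assert (bound : exists J, forall j, In (Oj j) l -> j < J).
    { clear lcov. induction l as [|W l IH].
      - exists 0. intros j [].
      - destruct IH as [J HJ]; [intros U hU; apply lF; right; auto|].
        destruct (classic (exists j, W = Oj j)) as [[j0 ->] | hn].
        + exists (Nat.max J (S j0)). intros j [h | h].
          * assert (e : j0 = j).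
            { assert (h1 : Oj j (exist _ (tp j) (ttp j))) by (unfold Oj, tp; simpl; rewrite Nat.eqb_refl; auto).
              rewrite <- h in h1. unfold Oj, tp in h1; simpl in h1. rewrite Nat.eqb_refl in h1. congruence. }
            lia.
          * specialize (HJ j h); lia.
        + exists J. intros j [h | h]; auto. exfalso; apply hn; eauto. }
    destruct bound as [J HJ].
    set (t := exist _ (tp J) (ttp J) : Baire).
    assert (Qt : Q t).
    { apply VQ. apply hV. simpl. apply (scott_upward PfD V' HV' (rr k c0)); auto.
      intros n v. unfold rr, tp, c0. destruct (Nat.ltb_spec n k); [|discriminate].
      destruct (Nat.eqb_spec n k); [lia|auto]. }
    destruct (lcov t Qt) as [W [inW Wt]].
    destruct (lF W inW) as [[j ->] | ->].
    + specialize (HJ j inW). unfold Oj, t, tp in Wt; simpl in Wt. rewrite Nat.eqb_refl in Wt.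
      injection Wt as ->. lia.
    + destruct Wt as [i [v [h1 [h2 h3]]]]. unfold t, tp in h2; simpl in h2.
      destruct (Nat.eqb_spec i k); [lia|]. congruence.
Qed.

Theorem proposition16p1 :
  (forall X : Top, domain_complete X -> exponentiable domain_complete X ->
     locally_compact X /\ sober X) /\
  (forall X : Top, LCS_complete X -> exponentiable LCS_complete X ->
     locally_compact X /\ sober X) /\
  ~ cartesian_closed domain_complete /\
  ~ cartesian_closed LCS_complete.
Proof.
  assert (P1 : forall X : Top, domain_complete X -> exponentiable domain_complete X ->
     locally_compact X /\ sober X).
  { intros X dc ex.
    assert (cc : core_compact X).
    { apply (exp_core domain_complete X); auto.
      - apply scott_domain_complete, BoolD_cont.
      - apply scott_domain_complete, UnitD_cont.
      - apply scott_domain_complete, PowD_cont. }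
    assert (sb : sober X).
    { destruct dc as [P [A [c [g h]]]]. apply (homeo_sub_sober X (scott_space P) A); auto.
      apply scott_sober; auto. }
    split; auto. apply cc_sober_lc; auto. }
  assert (P2 : forall X : Top, LCS_complete X -> exponentiable LCS_complete X ->
     locally_compact X /\ sober X).
  { intros X dc ex.
    assert (cc : core_compact X).
    { apply (exp_core LCS_complete X); auto.
      - apply domain_LCS, scott_domain_complete, BoolD_cont.
      - apply domain_LCS, scott_domain_complete, UnitD_cont.
      - apply domain_LCS, scott_domain_complete, PowD_cont. }
    assert (sb : sober X).
    { destruct dc as [Y [A [lY [sY [g h]]]]]. apply (homeo_sub_sober X Y A); auto. }
    split; auto. apply cc_sober_lc; auto. }
  split; [exact P1|]. split; [exact P2|]. split.
  - intro ccc. apply Baire_not_lc. apply (P1 Baire Baire_dc). apply ccc, Baire_dc.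
  - intro ccc. apply Baire_not_lc. apply (P2 Baire (domain_LCS _ Baire_dc)). apply ccc, domain_LCS, Baire_dc.
Qed.
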